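(* Let $\mathcal L_H:\mathbb R^{D_1\times\cdots\times D_N}\to\mathbb R_{\ge0}$ be differentiable and $\phi_H((W^{(\nu)})_{\nu\in\mathcal T}):=\mathcal L_H(\mathcal W_H)$ for a hierarchical tensor factorization with mode tree $\mathcal T$. Let $\nu\in\mathrm{int}(\mathcal T)$, $\nu_c\in C(\nu)$, and $r\in[R_\nu]$. If both $W^{(\nu)}_{r,:}=0$ and $W^{(\nu_c)}_{:,r}=0$, then $$\frac{\partial}{\partial W^{(\nu)}_{r,:}}\phi_H\big((W^{(\nu')})_{\nu'\in\mathcal T}\big)=0\quad\text{and}\quad\frac{\partial}{\partial W^{(\nu_c)}_{:,r}}\phi_H\big((W^{(\nu')})_{\nu'\in\mathcal T}\big)=0.$$
   Context: Fix $N\in\mathbb N$, $D_1,\dots,D_N\in\mathbb N$; $[K]:=\{1,\dots,K\}$; $\otimes$ the tensor product. A mode tree $\mathcal T$ over $[N]$ is a rooted tree whose nodes are labeled by subsets of $[N]$, with exactly $N$ leaves labeled $\{1\},\dots,\{N\}$, and where each interior node's label is the union of its children's labels; nodes are identified with labels, root $[N]$, $\mathrm{int}(\mathcal T)$ interior nodes, $Pa(\nu)$ parent, $C(\nu)$ children (fixed order). A hierarchical tensor factorization has $R_\nu\in\mathbb N$ ($\nu\in\mathrm{int}(\mathcal T)$), $R_{Pa([N])}:=1$, $R_{\{n\}}:=D_n$, weight matrices $W^{(\nu)}\in\mathbb R^{R_\nu\times R_{Pa(\nu)}}$. Intermediate tensors: $\mathcal W^{(\{n\},r)}:=W^{(\{n\})}_{:,r}$;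 for $\nu\in\mathrm{int}(\mathcal T)\setminus\{[N]\}$ (leaves to root), $r\in[R_{Pa(\nu)}]$: $\mathcal W^{(\nu,r)}:=\pi_\nu\big(\sum_{r'=1}^{R_\nu}W^{(\nu)}_{r',r}\bigotimes_{\nu_c\in C(\nu)}\mathcal W^{(\nu_c,r')}\big)$; end tensor $\mathcal W_H:=\pi_{[N]}\big(\sum_{r'=1}^{R_{[N]}}W^{([N])}_{r',1}\bigotimes_{\nu_c\in C([N])}\mathcal W^{(\nu_c,r')}\big)$, where $\pi_\nu$ permutes modes (ordered by children, each child's elements ascending) into ascending order of the elements of $\nu$. *)

(* Defs.v *)
From Stdlib Require List.
From HB Require Import structures.
From mathcomp Require Import all_boot all_order all_algebra.
From mathcomp Require Import all_classical all_reals all_analysis.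
Set Implicit Arguments. Unset Strict Implicit. Unset Printing Implicit Defensive.
Import Order.TTheory GRing.Theory Num.Theory.
Import numFieldNormedType.Exports.
Local Open Scope ring_scope.

(* Modes are 0-indexed: mode n of the paper corresponds to the ordinal n-1 : 'I_N. *)

Inductive mtree (N : nat) : Type :=
| MLeaf of 'I_N
| MNode of seq (mtree N).
Arguments MLeaf {N}.
Arguments MNode {N}.

Section Tree.
Variable N : nat.

Fixpoint leaves (t : mtree N) : seq 'I_N :=
  match t with
  | MLeaf n => [:: n]
  | MNode cs => flatten (map leaves cs)
  end.

Definition lab (t : mtree N) : {set 'I_N} := [set i in leaves t].

Fixpoint subtrees (t : mtree N) : seq (mtree N) :=
  t :: match t with
       | MLeaf _ => [::]
       | MNode cs => flatten (map subtrees cs)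
       end.

Definition is_node (t : mtree N) : bool := if t is MNode _ then true else false.
Definition children (t : mtree N) : seq (mtree N) :=
  if t is MNode cs then cs else [::].

(* T is a mode tree over [N]:
   - the root is an interior node (root label [N], and [N] \in int(T));
   - the leaves are labeled {1},...,{N}, each exactly once;
   - every interior node has at least one child;
   - distinct nodes have distinct labels (nodes are identified with labels). *)
Definition mode_tree (T : mtree N) : Prop :=
  [/\ is_node T,
      perm_eq (leaves T) (enum 'I_N),
      (forall s, List.In s (subtrees T) -> is_node s -> ~~ nilp (children s))
    & uniq (map lab (subtrees T))].

Variable D : 'I_N -> nat.
Variable Rk : {set 'I_N} -> nat.

Definition rk (t : mtree N) : nat :=
  match t with MLeaf n => D n | MNode _ => Rk (lab t) end.

(* R_{Pa(nu)} for a node nu of T (with R_{Pa([N])} := 1):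
   search the node labeled nu, passing down the rank of the parent. *)
Fixpoint find_prk (nu : {set 'I_N}) (p : nat) (s : mtree N) : option nat :=
  if lab s == nu then Some p else
  match s with
  | MLeaf _ => None
  | MNode cs =>
      (fix go (cs : seq (mtree N)) : option nat :=
         match cs with
         | [::] => None
         | c :: cs' =>
             match find_prk nu (Rk (lab s)) c with
             | Some x => Some x
             | None => go cs'
             end
         end) cs
  end.

Definition pa_rank (T : mtree N) (nu : {set 'I_N}) : nat :=
  odflt 0%N (find_prk nu 1 T).

Definition idx := {dffun forall n : 'I_N, 'I_(D n)}.

Variable R : realType.

(* the tensor space R^{D_1 x ... x D_N}, realised as row vectors indexed by
   (an enumeration of) the multi-indices, with its canonical normed structure *)
Definition tensor := 'rV[R]_#|{: idx}|.

Definition mk_tensor (f : idx -> R) : tensor := \row_k f (enum_val k).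

(* weight matrices: W nu is W^{(nu)}, W nu a b its entry (a,b) (0-indexed);
   only entries with a < R_nu, b < R_{Pa(nu)} are ever used. *)
Variable W : {set 'I_N} -> nat -> nat -> R.

(* ent t r i : entry of the intermediate tensor W^{(t, r)} (0-indexed r)
   at the multi-index (i_n)_{n in t} (i.e. i restricted to the modes of t,
   modes in ascending order, which is what pi_nu produces). The tensor
   product of the children's tensors followed by the permutation pi_nu
   gives the entrywise product of the children's entries at the
   corresponding restricted indices. *)
Fixpoint ent (t : mtree N) (r : nat) (i : idx) {struct t} : R :=
  match t with
  | MLeaf n => W (lab t) (i n) r
  | MNode cs =>
      \sum_(r' < Rk (lab t))
        W (lab t) r' r *
        (fix prodc (cs : seq (mtree N)) : R :=
           match cs with
           | [::] => 1
           | c :: cs' => ent c r' i * prodc cs'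
           end) cs
  end.

(* end tensor W_H (the root's column index 1 is index 0 here) *)
Definition endT (T : mtree N) : tensor := mk_tensor (fun i => ent T 0 i).

End Tree.

Definition phiH (N : nat) (D : 'I_N -> nat) (Rk : {set 'I_N} -> nat)
  (R : realType) (T : mtree N) (L : tensor D R -> R)
  (W : {set 'I_N} -> nat -> nat -> R) : R :=
  L (@endT N D Rk R W T).

Definition upd (N : nat) (R : Type) (W : {set 'I_N} -> nat -> nat -> R)
  (nu : {set 'I_N}) (a b : nat) (x : R) : {set 'I_N} -> nat -> nat -> R :=
  fun mu p q => if (mu == nu) && (p == a) && (q == b) then x else W mu p q.

(* Main.v *)
Require Import Defs.
From Stdlib Require List.
From HB Require Import structures.
From mathcomp Require Import all_boot all_order all_algebra.
From mathcomp Require Import all_classical all_reals all_analysis.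
Import Order.TTheory GRing.Theory Num.Theory.
Import numFieldNormedType.Exports.
Local Open Scope ring_scope.
Set Implicit Arguments. Unset Strict Implicit.

Section Lists.
Lemma In_cat {A : Type} (x : A) s1 s2 :
  List.In x (s1 ++ s2) <-> List.In x s1 \/ List.In x s2.
Proof.
elim: s1 => [|a s1 IH] /=; first by split; [right|case].
rewrite IH; tauto.
Qed.

Lemma In_flat {A B : Type} (g : A -> seq B) x l :
  List.In x (flatten (map g l)) <-> exists y, List.In y l /\ List.In x (g y).
Proof.
elim: l => [|a l IH] /=; first by split; [|case=> y []].
rewrite In_cat IH; split.
- case=> [H|[y [H1 H2]]]; [by exists a; split; [left|] | by exists y; split; [right|]].
- case=> y [[<-|H1] H2]; [by left | by right; exists y].
Qed.

Lemma In_split' {A : Type} (x : A) l :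
  List.In x l -> exists pre post, l = pre ++ x :: post.
Proof.
elim: l => [|a l IH] //= [->|/IH [pre [post ->]]]; first by exists [::], l.
by exists (a :: pre), post.
Qed.

Lemma In_mem {A : Type} {B : eqType} (f : A -> B) x l :
  List.In x l -> f x \in map f l.
Proof. elim: l => [|a l IH] //= [->|/IH H]; by rewrite in_cons ?eqxx ?H ?orbT. Qed.

Lemma uniq_inj {A : Type} {B : eqType} (f : A -> B) l x y :
  uniq (map f l) -> List.In x l -> List.In y l -> f x = f y -> x = y.
Proof.
elim: l => [|a l IH] //= /andP[Hn Hu] [<-|Hx] [<-|Hy] //.
- by move=> E; move: Hn; rewrite E (In_mem f Hy).
- by move=> E; move: Hn; rewrite -E (In_mem f Hx).
- exact: IH.
Qed.

Lemma uniq_disj {A : Type} {B : eqType} (f : A -> B) l1 l2 x y :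
  uniq (map f (l1 ++ l2)) -> List.In x l1 -> List.In y l2 -> f x <> f y.
Proof.
rewrite map_cat cat_uniq => /and3P[_ Hh _] Hx Hy E.
move/negP: Hh; apply; apply/hasP; exists (f y); first exact: In_mem.
by rewrite -E; apply: In_mem.
Qed.

Lemma uniq_catl {A : Type} {B : eqType} (f : A -> B) l1 l2 :
  uniq (map f (l1 ++ l2)) -> uniq (map f l1).
Proof. by rewrite map_cat cat_uniq => /and3P[]. Qed.

Lemma uniq_catr {A : Type} {B : eqType} (f : A -> B) l1 l2 :
  uniq (map f (l1 ++ l2)) -> uniq (map f l2).
Proof. by rewrite map_cat cat_uniq => /and3P[]. Qed.
End Lists.

Section Trees.
Variable N : nat.
Implicit Types s t x y c k : mtree N.
Implicit Types cs pre post : seq (mtree N).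

Fixpoint mtree_ind' (P : mtree N -> Prop) (HL : forall n, P (MLeaf n))
  (HN : forall cs, (forall c, List.In c cs -> P c) -> P (MNode cs)) t : P t :=
  match t with
  | MLeaf n => HL n
  | MNode cs => HN cs ((fix go (cs : seq (mtree N)) : forall c, List.In c cs -> P c :=
       match cs as l return forall c, List.In c l -> P c with
       | [::] => fun c H => False_ind _ H
       | c0 :: cs' => fun c H => match H with
                                 | or_introl E => eq_ind c0 P (@mtree_ind' P HL HN c0) c E
                                 | or_intror H' => go cs' c H'
                                 end
       end) cs)
  end.

Fixpoint msize t : nat :=
  match t with
  | MLeaf _ => 1
  | MNode cs => S ((fix sz (l : seq (mtree N)) : nat :=
                    match l with
                    | [::] => 0%N
                    | c :: l' => addn (msize c) (sz l')
                    end) cs)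
  end.

Lemma msize_child c cs : List.In c cs -> (msize c < msize (MNode cs))%N.
Proof.
rewrite /=; elim: cs => [|a cs IH] //= [->|/IH H]; first by rewrite ltnS leq_addr.
by apply: (leq_trans H); rewrite ltnS leq_addl.
Qed.

Lemma sub_self t : List.In t (subtrees t).
Proof. by case: t => [n|cs]; left. Qed.

Lemma sub_child c cs x : List.In c cs -> List.In x (subtrees c) ->
  List.In x (subtrees (MNode cs)).
Proof. by move=> Hc Hx; right; apply/In_flat; exists c. Qed.

Lemma sub_node x cs : List.In x (subtrees (MNode cs)) ->
  x = MNode cs \/ exists c, List.In c cs /\ List.In x (subtrees c).
Proof. by case=> [<-|/In_flat H]; [left|right]. Qed.

Lemma msize_sub x t : List.In x (subtrees t) -> (msize x <= msize t)%N.
Proof.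
elim/mtree_ind': t x => [n|cs IH] x.
  by case=> [<-|[]].
case/sub_node=> [->//|[c [Hc Hx]]].
apply: (leq_trans (IH c Hc x Hx)); apply: ltnW; exact: msize_child Hc.
Qed.

Lemma not_sub_child c cs : List.In c cs -> ~ List.In (MNode cs) (subtrees c).
Proof.
move=> Hc /msize_sub H; have := msize_child Hc.
by rewrite ltnNge H.
Qed.

Lemma sub_trans x y z : List.In x (subtrees y) -> List.In y (subtrees z) ->
  List.In x (subtrees z).
Proof.
move=> Hx; elim/mtree_ind': z => [n|cs IH].
  by case=> [->|[]].
case/sub_node=> [<-//|[c [Hc Hy]]].
exact: sub_child Hc (IH c Hc Hy).
Qed.

Lemma subtrees_split pre c post :
  subtrees (MNode (pre ++ c :: post)) =
  MNode (pre ++ c :: post) :: (flatten (map (@subtrees N) pre) ++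
     (subtrees c ++ flatten (map (@subtrees N) post))).
Proof. by rewrite /= map_cat flatten_cat. Qed.

Lemma uniq_child c cs : uniq (map (@lab N) (subtrees (MNode cs))) ->
  List.In c cs -> uniq (map (@lab N) (subtrees c)).
Proof.
move=> U Hc; have [pre [post E]] := In_split' Hc; subst cs.
move: U; rewrite subtrees_split /= => /andP[_ U].
exact: (uniq_catl (uniq_catr U)).
Qed.

Lemma sibling pre c post k x y :
  uniq (map (@lab N) (subtrees (MNode (pre ++ c :: post)))) ->
  List.In k pre \/ List.In k post -> List.In x (subtrees k) ->
  List.In y (subtrees c) -> lab x <> lab y.
Proof.
rewrite subtrees_split /= => /andP[_ U] [Hk|Hk] Hx Hy.
- apply: (uniq_disj U); first by apply/In_flat; exists k.
  by apply/In_cat; left.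
- move=> E; have Hx' : List.In x (flatten (map (@subtrees N) post)).
    by apply/In_flat; exists k.
  exact: (uniq_disj (uniq_catr U) Hy Hx').
Qed.

Variable Rk : {set 'I_N} -> nat.

Fixpoint gofind (mu : {set 'I_N}) (p : nat) (cs : seq (mtree N)) : option nat :=
  match cs with
  | [::] => None
  | c :: cs' => match find_prk Rk mu p c with
                | Some x => Some x
                | None => gofind mu p cs'
                end
  end.

Lemma find_node mu p cs : find_prk Rk mu p (MNode cs) =
  if lab (MNode cs) == mu then Some p else gofind mu (Rk (lab (MNode cs))) cs.
Proof.
rewrite /=; case: ifP => // _.
move: (Rk (lab (MNode cs))) => p'.
by elim: cs => [|c cs IH] //=; rewrite IH.
Qed.

Lemma gofind_Some mu p cs q : gofind mu p cs = Some q ->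
  exists c q', List.In c cs /\ find_prk Rk mu p c = Some q'.
Proof.
elim: cs => [|c cs IH] //=; case E: find_prk => [a|].
  by move=> _; exists c, a; split; [left|].
by move/IH => [c' [q' [H1 H2]]]; exists c', q'; split; [right|].
Qed.

Lemma find_Some_lab mu p t q : find_prk Rk mu p t = Some q ->
  exists x, List.In x (subtrees t) /\ lab x = mu.
Proof.
elim/mtree_ind': t p q => [n|cs IH] p q.
  rewrite /=; case: ifP => // /eqP E _; exists (MLeaf n); split => //; by left.
rewrite find_node; case: ifP => [/eqP E _|_].
  by exists (MNode cs); split => //; left.
case/gofind_Some => c [q' [Hc Hf]].
have [x [Hx Ex]] := IH c Hc _ _ Hf.
by exists x; split => //; apply: sub_child Hc Hx.
Qed.

Lemma gofind_some mu p cs c q : List.In c cs -> find_prk Rk mu p c = Some q ->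
  exists q', gofind mu p cs = Some q'.
Proof.
elim: cs => [|a cs IH] //= [->|Hc] Hf; first by rewrite Hf; exists q.
case: find_prk => [b|]; first by exists b.
exact: IH Hc Hf.
Qed.

Lemma find_some mu p t x : List.In x (subtrees t) -> lab x = mu ->
  exists q, find_prk Rk mu p t = Some q.
Proof.
elim/mtree_ind': t p => [n|cs IH] p.
  case=> [<-|[]] <-; by rewrite /= eqxx; exists p.
rewrite find_node; case: ifP => [_|Hne]; first by exists p.
case/sub_node => [Ex|[c [Hc Hx]]]; first by move=> E; move: Hne; rewrite -E Ex eqxx.
move=> Ex; have [q Hq] := IH c Hc (Rk (lab (MNode cs))) Hx Ex.
exact: gofind_some Hc Hq.
Qed.

Lemma gofind_cat mu p pre post :
  (forall c, List.In c pre -> find_prk Rk mu p c = None) ->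
  gofind mu p (pre ++ post) = gofind mu p post.
Proof.
elim: pre => [|a pre IH] //= H.
rewrite H; last by left.
by apply: IH => c Hc; apply: H; right.
Qed.

End Trees.

Lemma uniq_sub N (t s : mtree N) : uniq (map (@lab N) (subtrees t)) ->
  List.In s (subtrees t) -> uniq (map (@lab N) (subtrees s)).
Proof.
elim/mtree_ind': t => [n|cs IH] U.
  by case=> [<-|[]].
case/sub_node=> [->//|[c [Hc Hs]]].
exact: IH Hc (uniq_child U Hc) Hs.
Qed.

Section Ent.
Variables (N : nat) (D : 'I_N -> nat) (Rk : {set 'I_N} -> nat) (R : realType).
Implicit Types (W : {set 'I_N} -> nat -> nat -> R) (s t x c k X : mtree N)
  (cs : seq (mtree N)).

Lemma prod_ext (F G : mtree N -> R) cs :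
  (forall c, List.In c cs -> F c = G c) -> \prod_(c <- cs) F c = \prod_(c <- cs) G c.
Proof.
elim: cs => [|a cs IH] H; first by rewrite !big_nil.
rewrite !big_cons H; last by left.
by rewrite IH // => c Hc; apply: H; right.
Qed.

Lemma prod_zero (F : mtree N -> R) cs c :
  List.In c cs -> F c = 0 -> \prod_(c <- cs) F c = 0.
Proof.
elim: cs => [|a cs IH] //= [->|Hc] H0; rewrite big_cons; first by rewrite H0 mul0r.
by rewrite IH // mulr0.
Qed.

Lemma ent_node W cs j (i : idx D) : ent Rk W (MNode cs) j i =
  \sum_(r' < Rk (lab (MNode cs))) W (lab (MNode cs)) r' j *
     \prod_(c <- cs) ent Rk W c r' i.
Proof.
rewrite /=; apply: eq_bigr => r' _; congr (_ * _).
move: (nat_of_ord r') => n; clear r'.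
by elim: cs => [|c cs IH]; rewrite ?big_nil ?big_cons //= IH.
Qed.

Lemma entA mu W W' : (forall nu, nu != mu -> W' nu = W nu) ->
  forall s, (forall x, List.In x (subtrees s) -> lab x != mu) ->
  forall j (i : idx D), ent Rk W' s j i = ent Rk W s j i.
Proof.
move=> HW; elim/mtree_ind' => [n|cs IH] Hs j i.
  by rewrite /= HW //; apply: Hs; left.
rewrite !ent_node HW; last by apply: Hs; left.
apply: eq_bigr => r' _; congr (_ * _); apply: prod_ext => c Hc.
apply: IH => // x Hx; apply: Hs; exact: sub_child Hc Hx.
Qed.

Lemma entD X (cond : nat -> Prop) W W' :
  (forall q, cond q -> forall j, (j < q)%N -> forall i : idx D,
      ent Rk W' X j i = ent Rk W X j i) ->
  forall s, uniq (map (@lab N) (subtrees s)) ->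
  (forall s', List.In s' (subtrees s) ->
     (forall x, List.In x (subtrees X) -> ~ List.In x (subtrees s')) ->
     forall j (i : idx D), ent Rk W' s' j i = ent Rk W s' j i) ->
  (forall s', List.In s' (subtrees s) -> List.In X (subtrees s') -> s' <> X ->
     W' (lab s') = W (lab s')) ->
  List.In X (subtrees s) ->
  forall p, cond (odflt 0%N (find_prk Rk (lab X) p s)) ->
  forall j, (j < p)%N -> forall i : idx D, ent Rk W' s j i = ent Rk W s j i.
Proof.
move=> HX; elim/mtree_ind' => [n|cs IH] U HW HW2 HXs p Hc j Hj i.
  case: HXs => [E|[]]; subst X.
  by rewrite /= eqxx /= in Hc; apply: HX Hc j Hj i.
case: (boolP (lab (MNode cs) == lab X)) => [E|Hne].
  have EX : MNode cs = X := uniq_inj U (sub_self _) HXs (eqP E).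
  subst X; rewrite find_node eqxx /= in Hc; exact: HX Hc j Hj i.
case/sub_node: HXs => [EX|[k [Hk HXk]]]; first by rewrite EX eqxx in Hne.
have [pre [post Ecs]] := In_split' Hk; subst cs.
have Hsib : forall k', List.In k' pre \/ List.In k' post ->
    forall x, List.In x (subtrees X) -> ~ List.In x (subtrees k').
  move=> k' Hk' x Hx Hx'.
  exact: (sibling U Hk' Hx' (sub_trans Hx HXk) erefl).
have Hfind : find_prk Rk (lab X) p (MNode (pre ++ k :: post)) =
    find_prk Rk (lab X) (Rk (lab (MNode (pre ++ k :: post)))) k.
  rewrite find_node (negbTE Hne) gofind_cat /=.
    have [q Hq] := find_some Rk (Rk (lab (MNode (pre ++ k :: post)))) HXk erefl.
    by rewrite Hq.
  move=> c' Hc'; case E: find_prk => [q|] //.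
  have [x [Hx Ex]] := find_Some_lab E.
  by case: (sibling U (or_introl Hc') Hx HXk Ex).
rewrite Hfind in Hc.
rewrite !ent_node HW2 //; first last.
- by move=> E; rewrite E eqxx in Hne.
- exact: sub_child Hk HXk.
- exact: sub_self.
apply: eq_bigr => r' _; congr (_ * _); apply: prod_ext => c' Hc'.
have Hc'' := Hc'.
case/In_cat: Hc' => [Hp|[<-|Hp]].
- apply: HW; first exact: sub_child Hc'' (sub_self _).
  by apply: Hsib; left.
- apply: (IH k Hk) => //.
  + exact: uniq_child U Hk.
  + by move=> s' Hs'; apply: HW; apply: sub_child Hk Hs'.
  + by move=> s' Hs'; apply: HW2; apply: sub_child Hk Hs'.
  + exact: Hc.
- apply: HW; first by apply: sub_child Hc'' (sub_self _).
  by apply: Hsib; right.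
Qed.

End Ent.

Unset Implicit Arguments. Set Strict Implicit.

Theorem lemma11 (R : realType) (N : nat) (D : 'I_N -> nat)
  (T : mtree N) (HT : mode_tree T)
  (Rk : {set 'I_N} -> nat)
  (L : tensor D R -> R)
  (HL0 : forall x, 0 <= L x)
  (HL : forall x, differentiable L x)
  (W : {set 'I_N} -> nat -> nat -> R)
  (cs : seq (mtree N)) (Hnu : List.In (MNode cs) (subtrees T))
  (c : mtree N) (Hc : List.In c cs)
  (r : nat) (Hr : (r < Rk (lab (MNode cs)))%N)
  (Hrow : forall j, (j < pa_rank Rk T (lab (MNode cs)))%N ->
            W (lab (MNode cs)) r j = 0)
  (Hcol : forall a, (a < rk D Rk c)%N -> W (lab c) a r = 0) :
  (forall j, (j < pa_rank Rk T (lab (MNode cs)))%N ->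
     is_derive (0 : R) (1 : R)
       (fun t : R => phiH Rk T L
          (upd W (lab (MNode cs)) r j (W (lab (MNode cs)) r j + t))) 0)
  /\
  (forall a, (a < rk D Rk c)%N ->
     is_derive (0 : R) (1 : R)
       (fun t : R => phiH Rk T L (upd W (lab c) a r (W (lab c) a r + t))) 0).
Proof.
have [_ _ _ UT] := HT.
have Hnuc : forall x, List.In x (subtrees T) -> lab x = lab (MNode cs) -> x = MNode cs.
  by move=> x Hx E; apply: (uniq_inj UT Hx Hnu E).
have Hcin : List.In c (subtrees T) := sub_trans (sub_child Hc (sub_self c)) Hnu.
have Hcc : forall x, List.In x (subtrees T) -> lab x = lab c -> x = c.
  by move=> x Hx E; apply: (uniq_inj UT Hx Hcin E).
have Hc0 : forall i : idx D, ent Rk W c r i = 0.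
  move=> i; case Ec: c Hcol => [n|cs'] Hcol'.
    by rewrite /=; apply: Hcol'; rewrite /=; exact: ltn_ord.
  by rewrite ent_node; apply: big1 => r' _; rewrite Hcol' ?mul0r.
have Hconst : forall W', (forall i : idx D, ent Rk W' T 0 i = ent Rk W T 0 i) ->
    phiH Rk T L W' = phiH Rk T L W.
  move=> W' H; rewrite /phiH /endT /mk_tensor; congr L.
  by apply/rowP => k; rewrite !mxE; apply: H.
have Unu : uniq (map (@lab N) (subtrees (MNode cs))) := uniq_sub UT Hnu.
split.
- move=> j Hj.
  set W' := fun t => upd W (lab (MNode cs)) r j (W (lab (MNode cs)) r j + t).
  have HWu : forall t nu, nu != lab (MNode cs) -> W' t nu = W nu.
    by move=> t nu Hne; apply/funext=> a; apply/funext=> b; rewrite /W' /upd (negbTE Hne).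
  have -> : (fun t => phiH Rk T L (W' t)) = cst (phiH Rk T L W).
    apply/funext => t; apply: Hconst => i.
    apply: (@entD N D Rk R (MNode cs) (fun _ => True) W (W' t) _ T UT _ _ Hnu 1%N _ 0%N) => //.
    + move=> q _ j' _ i'; rewrite !ent_node.
      have Hch : forall c', List.In c' cs -> forall r' (i0 : idx D),
          ent Rk (W' t) c' r' i0 = ent Rk W c' r' i0.
        move=> c' Hc' r' i0; apply: (@entA N D Rk R (lab (MNode cs))); first exact: HWu.
        move=> x Hx; apply/eqP => E.
        have Ex := Hnuc x (sub_trans Hx (sub_trans (sub_child Hc' (sub_self _)) Hnu)) E.
        subst x; exact: not_sub_child Hc' Hx.
      apply: eq_bigr => r' _.
      have -> : \prod_(c0 <- cs) ent Rk (W' t) c0 r' i' = \prod_(c0 <- cs) ent Rk W c0 r' i'.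
        by apply: prod_ext => c' Hc'; apply: Hch.
      rewrite /W' /upd eqxx /=; case: ifP => [/andP[/eqP Er _]|_] //.
      by rewrite Er (prod_zero Hc (Hc0 i')) !mulr0.
    + move=> s' Hs' Hdisj j0 i0; apply: (@entA N D Rk R (lab (MNode cs))); first exact: HWu.
      move=> x Hx; apply/eqP => E; have Ex := Hnuc x (sub_trans Hx Hs') E.
      subst x; exact: Hdisj (MNode cs) (sub_self _) Hx.
    + move=> s' Hs' _ Hne; apply: HWu; apply/eqP => E; exact: Hne (Hnuc s' Hs' E).
  exact: is_derive_cst.
- move=> a Ha.
  set W' := fun t => upd W (lab c) a r (W (lab c) a r + t).
  have HWu : forall t nu, nu != lab c -> W' t nu = W nu.
    by move=> t nu Hne; apply/funext=> a'; apply/funext=> b; rewrite /W' /upd (negbTE Hne).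
  have Hlabne : lab (MNode cs) != lab c.
    apply/eqP => E; have Ec := Hcc _ Hnu E.
    by apply: (not_sub_child Hc); rewrite -Ec; apply: sub_self.
  have Hcr : forall t r', r' <> r -> forall i : idx D, ent Rk (W' t) c r' i = ent Rk W c r' i.
    move=> t r' Nr i; case Ec: c => [n|cs'].
      by rewrite /= /W' /upd (introF eqP Nr) andbF.
    rewrite !ent_node; apply: eq_bigr => r'' _; congr (_ * _).
      by rewrite /W' /upd (introF eqP Nr) andbF.
    apply: prod_ext => c'' Hc''; apply: (@entA N D Rk R (lab c)); first exact: HWu.
    move=> x Hx; apply/eqP => E.
    have Hx' : List.In x (subtrees T).
      by apply: (sub_trans Hx); apply: (sub_trans _ Hcin); rewrite Ec; apply: sub_child Hc'' (sub_self _).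
    have Ex := Hcc x Hx' E; subst x.
    by move: Hx; rewrite Ec; apply: not_sub_child Hc''.
  have -> : (fun t => phiH Rk T L (W' t)) = cst (phiH Rk T L W).
    apply/funext => t; apply: Hconst => i.
    apply: (@entD N D Rk R (MNode cs)
       (fun q => forall j, (j < q)%N -> W (lab (MNode cs)) r j = 0)
       W (W' t) _ T UT _ _ Hnu 1%N _ 0%N) => //.
    + move=> q Hq j' Hj' i'; rewrite !ent_node HWu //.
      apply: eq_bigr => r' _; case: (eqVneq (nat_of_ord r') r) => [Er|Nr].
        by rewrite Er (Hq j' Hj') !mul0r.
      congr (_ * _); apply: prod_ext => c' Hc'.
      have [pre [post Ecs]] := In_split' Hc.
      have Hc2 := Hc'; rewrite Ecs in Hc2.
      case/In_cat: Hc2 => [Hp|[<-|Hp]].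
      * apply: (@entA N D Rk R (lab c)); first exact: HWu.
        move=> x Hx; apply/eqP => E.
        have Ex := Hcc x (sub_trans Hx (sub_trans (sub_child Hc' (sub_self _)) Hnu)) E.
        subst x; rewrite Ecs in Unu.
        exact: (sibling Unu (or_introl Hp) Hx (sub_self c) erefl).
      * by apply: Hcr; apply/eqP.
      * apply: (@entA N D Rk R (lab c)); first exact: HWu.
        move=> x Hx; apply/eqP => E.
        have Ex := Hcc x (sub_trans Hx (sub_trans (sub_child Hc' (sub_self _)) Hnu)) E.
        subst x; rewrite Ecs in Unu.
        exact: (sibling Unu (or_intror Hp) Hx (sub_self c) erefl).
    + move=> s' Hs' Hdisj j0 i0; apply: (@entA N D Rk R (lab c)); first exact: HWu.
      move=> x Hx; apply/eqP => E; have Ex := Hcc x (sub_trans Hx Hs') E.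
      subst x; exact: Hdisj c (sub_child Hc (sub_self _)) Hx.
    + move=> s' Hs' Hnus _; apply: HWu; apply/eqP => E.
      have Es := Hcc s' Hs' E; subst s'.
      exact: not_sub_child Hc Hnus.
  exact: is_derive_cst.
Qed.
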